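(* Let $(\mathfrak g,[\cdot,\cdot],\varepsilon,B)$ be a quadratic color Lie algebra and let $\theta$ be an even, invertible, $B$-symmetric element of the centroid of $\mathfrak g$. Define $[x,y]_1^\theta=[\theta(x),y]$, $[x,y]_2^\theta=[\theta(x),\theta(y)]$ and $B_\theta(x,y)=B(\theta(x),y)$. Then $(\mathfrak g,[\cdot,\cdot]_1^\theta,\theta,\varepsilon,B_\theta)$ and $(\mathfrak g,[\cdot,\cdot]_2^\theta,\theta,\varepsilon,B_\theta)$ are quadratic color Hom-Lie algebras.
   Context: $\mathbb K$ is a field of characteristic zero and $\Gamma$ an abelian group. A bicharacter is a map $\varepsilon:\Gamma\times\Gamma\to\mathbb K\setminus\{0\}$ with $\varepsilon(a,b)\varepsilon(b,a)=1$, $\varepsilon(a,b+c)=\varepsilon(a,b)\varepsilon(a,c)$, $\varepsilon(a+b,c)=\varepsilon(a,c)\varepsilon(b,c)$; for homogeneous $x,y$, $\varepsilon(x,y)$ means $\varepsilon(\deg x,\deg y)$. A color Hom-Lie algebra $(\mathfrak g,[\cdot,\cdot],\alpha,\varepsilon)$ is a $\Gamma$-graded vector space with even (degree-preserving) bilinear bracket and even linear $\alpha$ such that $[x,y]=-\varepsilon(x,y)[y,x]$ and $\varepsilon(z,x)[\alpha(x),[y,z]]+\varepsilon(x,y)[\alpha(y),[z,x]]+\varepsilon(y,z)[\alpha(z),[x,y]]=0$ for homogeneous $x,y,z$; a color Lie algebra $(\mathfrak g,[\cdot,\cdot],\varepsilon)$ is the case $\alpha=\mathrm{id}$. A color Hom-Lie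 algebra is quadratic, written $(\mathfrak g,[\cdot,\cdot],\alpha,\varepsilon,B)$, if $B$ is a nondegenerate bilinear form which is $\varepsilon$-symmetric ($B(x,y)=\varepsilon(x,y)B(y,x)$), invariant ($B([x,y],z)=B(x,[y,z])$), and $B(\alpha(x),y)=B(x,\alpha(y))$; a quadratic color Lie algebra is the case $\alpha=\mathrm{id}$. The centroid consists of linear maps $\theta$ with $\theta([x,y])=[\theta(x),y]=\varepsilon(\theta,x)[x,\theta(y)]$; $\theta$ is $B$-symmetric if $B(\theta(x),y)=B(x,\theta(y))$. *)

(* Defs.v *)
From mathcomp Require Import all_boot all_order all_algebra.
Set Implicit Arguments. Unset Strict Implicit. Unset Printing Implicit Defensive.
Import Order.TTheory GRing.Theory Num.Theory.
Local Open Scope ring_scope.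

Section ColorDefs.
Variables (Γ : zmodType) (K : fieldType) (V : lmodType K).

Definition linmap (f : V -> V) : Prop :=
  forall (k : K) (x y : V), f (k *: x + y) = k *: f x + f y.

Definition bilin_map (br : V -> V -> V) : Prop :=
  (forall (x : V) (k : K) (y z : V), br x (k *: y + z) = k *: br x y + br x z) /\
  (forall (y : V) (k : K) (x z : V), br (k *: x + z) y = k *: br x y + br z y).

Definition bilin_form (B : V -> V -> K) : Prop :=
  (forall (x : V) (k : K) (y z : V), B x (k *: y + z) = k * B x y + B x z) /\
  (forall (y : V) (k : K) (x z : V), B (k *: x + z) y = k * B x y + B z y).

(* A Γ-grading V = ⊕_a V_a, given by the family of projections pr a : V -> V_a. *)
Definition grading (pr : Γ -> V -> V) : Prop :=
  [/\ forall a, linmap (pr a),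
      forall a b v, pr a (pr b v) = if a == b then pr b v else 0
    & forall v, exists s : seq Γ, uniq s /\ v = \sum_(a <- s) pr a v].

Definition homog (pr : Γ -> V -> V) (a : Γ) (x : V) : Prop := pr a x = x.

Definition bicharacter (eps : Γ -> Γ -> K) : Prop :=
  [/\ forall a b, eps a b != 0,
      forall a b, eps a b * eps b a = 1,
      forall a b c, eps a (b + c) = eps a b * eps a c
    & forall a b c, eps (a + b) c = eps a c * eps b c].

Definition even_map (pr : Γ -> V -> V) (f : V -> V) : Prop :=
  forall a x, homog pr a x -> homog pr a (f x).

Definition color_HomLie (pr : Γ -> V -> V) (br : V -> V -> V) (alpha : V -> V)
    (eps : Γ -> Γ -> K) : Prop :=
  [/\ bilin_map br, linmap alpha /\ even_map pr alpha,
      (forall a b x y, homog pr a x -> homog pr b y -> homog pr (a + b) (br x y)),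
      (forall a b x y, homog pr a x -> homog pr b y -> br x y = - (eps a b *: br y x))
    & (forall a b c x y z, homog pr a x -> homog pr b y -> homog pr c z ->
         eps c a *: br (alpha x) (br y z) + eps a b *: br (alpha y) (br z x)
         + eps b c *: br (alpha z) (br x y) = 0)].

Definition quad_color_HomLie (pr : Γ -> V -> V) (br : V -> V -> V) (alpha : V -> V)
    (eps : Γ -> Γ -> K) (B : V -> V -> K) : Prop :=
  [/\ color_HomLie pr br alpha eps /\ bilin_form B,
      (forall x, (forall y, B x y = 0) -> x = 0),
      (forall a b x y, homog pr a x -> homog pr b y -> B x y = eps a b * B y x),
      (forall x y z, B (br x y) z = B x (br y z))
    & (forall x y, B (alpha x) y = B x (alpha y))].

Definition quad_color_Lie (pr : Γ -> V -> V) (br : V -> V -> V)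
    (eps : Γ -> Γ -> K) (B : V -> V -> K) : Prop :=
  quad_color_HomLie pr br id eps B.

Definition centroid_elem (pr : Γ -> V -> V) (br : V -> V -> V) (eps : Γ -> Γ -> K)
    (d : Γ) (theta : V -> V) : Prop :=
  [/\ linmap theta,
      (forall a x, homog pr a x -> homog pr (a + d) (theta x)),
      (forall x y, theta (br x y) = br (theta x) y)
    & (forall a x y, homog pr a x -> br (theta x) y = eps d a *: br x (theta y))].

Definition B_symmetric (B : V -> V -> K) (theta : V -> V) : Prop :=
  forall x y, B (theta x) y = B x (theta y).

End ColorDefs.

(* Main.v *)
Require Import Defs.
From mathcomp Require Import all_boot all_order all_algebra.
Import GRing.Theory.
Local Open Scope ring_scope.

Theorem mainTheorem4 (Γ : zmodType) (K : fieldType) (V : lmodType K)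
    (pr : Γ -> V -> V) (br : V -> V -> V) (eps : Γ -> Γ -> K)
    (B : V -> V -> K) (theta : V -> V) :
  [pchar K] =i pred0 ->
  grading pr -> bicharacter eps ->
  quad_color_Lie pr br eps B ->
  centroid_elem pr br eps 0 theta -> even_map pr theta ->
  bijective theta -> B_symmetric B theta ->
  quad_color_HomLie pr (fun x y => br (theta x) y) theta eps (fun x y => B (theta x) y) /\
  quad_color_HomLie pr (fun x y => br (theta x) (theta y)) theta eps
    (fun x y => B (theta x) y).
Proof.
move=> _ _ [eps_nz eps_inv eps_addr eps_addl]
  [[[brbil _ brhom brskew brjac] Bbil] Bnd Bsym Binv _]
  [thlin thhom thbr1 thbr2] thev [thi thK thK'] Bth.
have eps0 : forall a, eps 0 a = 1.
  move=> a; apply: (mulfI (eps_nz 0 a)) => /=.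
  by rewrite mulr1 -eps_addl addr0.
have thD : forall u v, theta (u + v) = theta u + theta v.
  by move=> u v; have := thlin 1 u v; rewrite !scale1r.
have th0 : theta 0 = 0.
  by apply: (addrI (theta 0)); rewrite -thD !addr0.
have thZ : forall k u, theta (k *: u) = k *: theta u.
  by move=> k u; rewrite -[k *: u]addr0 thlin th0 addr0.
have L1 : forall x y, br (theta x) y = theta (br x y) by move=> x y; rewrite thbr1.
have L2 : forall a x y, homog pr a x -> br x (theta y) = theta (br x y).
  by move=> a x y hx; rewrite -L1 (thbr2 _ _ _ hx) eps0 scale1r.
have binD : forall x k y z, br x (k *: y + z) = k *: br x y + br x z := brbil.1.
have binG : forall y k x z, br (k *: x + z) y = k *: br x y + br z y := brbil.2.
have BD : forall x k y z, B x (k *: y + z) = k * B x y + B x z := Bbil.1.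
have BG : forall y k x z, B (k *: x + z) y = k * B x y + B z y := Bbil.2.
have nd : forall x, (forall y, B (theta x) y = 0) -> x = 0.
  move=> x H; have h : theta x = 0 by apply: Bnd.
  by rewrite -(thK x) h -th0 thK.
have sym : forall a b x y, homog pr a x -> homog pr b y ->
    B (theta x) y = eps a b * B (theta y) x.
  by move=> a b x y hx hy; rewrite (Bsym _ _ _ _ (thev _ _ hx) hy) Bth.
split; split.
- split; last by split=> * /=; [rewrite BD | rewrite thlin BG].
  split.
  + split=> *; [by rewrite binD | by rewrite thlin binG].
  + by split.
  + by move=> a b x y hx hy; apply: brhom => //; apply: thev.
  + move=> a b x y hx hy /=.
    by rewrite (brskew _ _ _ _ (thev _ _ hx) hy) (L2 _ _ _ hy) L1.
  + move=> a b c x y z hx hy hz /=.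
    have J := brjac _ _ _ _ _ _ hx hy hz; rewrite /= in J.
    rewrite !L1 (L2 _ _ _ hx) (L2 _ _ _ hy) (L2 _ _ _ hz).
    by rewrite -!thZ -!thD J !th0.
- exact: nd.
- exact: sym.
- move=> x y z /=.
  by rewrite thbr1 Binv Bth thbr1.
- by move=> x y; rewrite Bth.
- split; last by split=> * /=; [rewrite BD | rewrite thlin BG].
  split.
  + split=> *; [by rewrite thlin binD | by rewrite thlin binG].
  + by split.
  + by move=> a b x y hx hy; apply: brhom => //; apply: thev.
  + move=> a b x y hx hy /=.
    by rewrite (brskew _ _ _ _ (thev _ _ hx) (thev _ _ hy)).
  + move=> a b c x y z hx hy hz /=.
    have J := brjac _ _ _ _ _ _ hx hy hz; rewrite /= in J.
    do 4! rewrite ?L1 ?(L2 _ _ _ hx) ?(L2 _ _ _ hy) ?(L2 _ _ _ hz).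
    by rewrite -!thZ -!thD J !th0.
- exact: nd.
- exact: sym.
- move=> x y z /=.
  by rewrite Bth Binv.
- by move=> x y; rewrite Bth.
Qed.
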